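(* Let $f=\frac1n\sum_{i=1}^n f_i$ with $f_i:\mathbb{R}^d\to\mathbb{R}$ differentiable and let $x^*$ be the minimizer of $f$. Let $\mathcal G$ be a partition of $[n]$ into sets of size $\tau$, and let $S$ be a random set with $\Pr(S=C)=p_C>0$ for $C\in\mathcal G$, $\sum_{C\in\mathcal G}p_C=1$. Assume that for every $C\in\mathcal G$ the function $f_C=\frac{1}{|C|}\sum_{i\in C}f_i$ is $L_C$-smooth and $\mu$-strongly convex ($\mu>0$). Let $\{x^k,\mathbf J^k\}$ be the iterates of minibatch SAGA with sampling $S$ and stepsize $\alpha$, and let $S$ also denote a copy of the sampling independent of the iterates. Define the stochastic Lyapunov function $$\Psi_S^k=\|x^k-x^*\|_2^2+2\sigma_S\alpha\Big\|\tfrac1n\mathbf J^ke-\nabla f_{S,\mathbf J^k}(x^* )\Big\|_2^2,\qquad \sigma_S=\frac{n}{4\tau L_S}.$$ If $\alpha\le\min_{C\in\mathcal G}\frac{p_C}{\mu+4L_C\tau/n}$, then $\mathbb{E}[\Psi_S^k]\le(1-\mu\alpha)^k\,\mathbb{E}[\Psi_S^0]$. Consequently, if $\alpha$ equals this upper bound, then $k\ge\max_{C\in\mathcal G}\left\{\frac1{p_C}+\frac{4L_C}{\mu}\frac{\tau}{np_C}\right\}\log\frac1\epsilon$ implies $\mathbb{E}[\Psi_S^k]\le\epsilon\,\mathbb{E}[\Psi_S^0]$.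
   Context: $e\in\mathbb{R}^n$ is the all-ones vector, $\mathbf J_{:i}$ the $i$-th column of $\mathbf J\in\mathbb{R}^{d\times n}$. For $C\in\mathcal G$ and $\mathbf J\in\mathbb{R}^{d\times n}$, $\nabla f_{C,\mathbf J}(x)=\frac1n\mathbf Je+\frac{1}{np_C}\sum_{i\in C}(\nabla f_i(x)-\mathbf J_{:i})$. Minibatch SAGA (JacSketch with $\mathbf W=\mathbf I$, sketch $\mathbf S=\mathbf I_S$, $\theta=1/p_S$): given $x^0\in\mathbb{R}^d$, $\mathbf J^0\in\mathbb{R}^{d\times n}$, for $k=0,1,\dots$ sample $S_k$ (independent copy of $S$), set $g^k=\frac1n\mathbf J^ke+\frac1{np_{S_k}}\sum_{i\in S_k}(\nabla f_i(x^k)-\mathbf J^k_{:i})$, $\mathbf J^{k+1}_{:i}=\nabla f_i(x^k)$ for $i\in S_k$ and $\mathbf J^{k+1}_{:i}=\mathbf J^k_{:i}$ otherwise, and $x^{k+1}=x^k-\alpha g^k$. $\mathbb{E}$ is over all randomness (iterates and $S$). *)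

(* Defs.v *)
From HB Require Import structures.
From mathcomp Require Import all_boot all_order all_algebra.
From mathcomp Require Import all_classical all_reals all_analysis.
Set Implicit Arguments. Unset Strict Implicit. Unset Printing Implicit Defensive.
Import Order.TTheory GRing.Theory Num.Theory.
Import numFieldNormedType.Exports.
Local Open Scope ring_scope.

Section Defs.
Variable R : realType.
Variables (d n : nat).
Notation vec := 'rV[R]_d.

Definition dotv (u v : vec) : R := (u *m v^T) 0 0.
Definition sqnorm (u : vec) : R := dotv u u.

Definition is_gradient (f : vec -> R) (g : vec -> vec) : Prop :=
  forall x, differentiable f x /\ ('d f x : vec -> R) = (fun h => dotv (g x) h).

Definition smooth_with (L : R) (g : vec -> vec) : Prop :=
  0 <= L /\ forall x y, sqnorm (g x - g y) <= L ^+ 2 * sqnorm (x - y).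

Definition strongly_convex_with (mu : R) (f : vec -> R) (g : vec -> vec) : Prop :=
  forall x y, f x + dotv (g x) (y - x) + mu / 2 * sqnorm (y - x) <= f y.

Variables (f : 'I_n -> vec -> R) (grad : 'I_n -> vec -> vec).

Definition fsum (x : vec) : R := n%:R^-1 * \sum_(i < n) f i x.

Definition fC (C : {set 'I_n}) (x : vec) : R := #|C|%:R^-1 * \sum_(i in C) f i x.
Definition gradC (C : {set 'I_n}) (x : vec) : vec :=
  #|C|%:R^-1 *: \sum_(i in C) grad i x.

(* Jacobian estimate J : columns J_{:i} in R^d, stored as J i. *)
Definition Jac := 'I_n -> vec.

Definition Jmean (J : Jac) : vec := n%:R^-1 *: \sum_(i < n) J i.

Definition gradCJ (p : {set 'I_n} -> R) (C : {set 'I_n}) (J : Jac) (x : vec) : vec :=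
  Jmean J + (n%:R * p C)^-1 *: \sum_(i in C) (grad i x - J i).

Definition saga_step (p : {set 'I_n} -> R) (alpha : R) (st : vec * Jac)
    (C : {set 'I_n}) : vec * Jac :=
  let: (x, J) := st in
  (x - alpha *: gradCJ p C J x, fun i => if i \in C then grad i x else J i).

Definition saga_iter (p : {set 'I_n} -> R) (alpha : R) (x0 : vec) (J0 : Jac)
    (s : seq {set 'I_n}) : vec * Jac :=
  foldl (saga_step p alpha) (x0, J0) s.

Definition Psi (p L : {set 'I_n} -> R) (tau : nat) (alpha : R) (xstar : vec)
    (C : {set 'I_n}) (st : vec * Jac) : R :=
  let sigma := n%:R / (4 * tau%:R * L C) in
  sqnorm (st.1 - xstar) + 2 * sigma * alpha * sqnorm (Jmean st.2 - gradCJ p C st.2 xstar).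

(* E[Psi_S^k]: expectation over i.i.d. S_0,...,S_{k-1} (the iterates) and an
   independent copy S, each with law P(S = C) = p_C for C in G. *)
Definition EPsi (G : {set {set 'I_n}}) (p L : {set 'I_n} -> R) (tau : nat)
    (alpha : R) (xstar : vec) (x0 : vec) (J0 : Jac) (k : nat) : R :=
  \sum_(s : k.-tuple {set 'I_n} | all (fun C => C \in G) s)
    \sum_(C in G)
      (\prod_(j < k) p (tnth s j)) * p C *
      Psi p L tau alpha xstar C (saga_iter p alpha x0 J0 s).

End Defs.

(* Main.v *)
Require Import Defs.
From HB Require Import structures.
From mathcomp Require Import all_boot all_order all_algebra.
From mathcomp Require Import all_classical all_reals all_analysis.
From mathcomp Require Import ring lra.
Import Order.TTheory GRing.Theory Num.Theory.
Import numFieldNormedType.Exports.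
Local Open Scope ring_scope.
Set Implicit Arguments. Unset Strict Implicit. Unset Printing Implicit Defensive.
Section Vec.
Variables (R : realType) (d : nat).
Notation vec := 'rV[R]_d.

Lemma dotvE (u v : vec) : dotv u v = \sum_j u 0 j * v 0 j.
Proof. by rewrite /dotv !mxE; apply: eq_bigr => j _; rewrite mxE. Qed.

Lemma dotvC (u v : vec) : dotv u v = dotv v u.
Proof. by rewrite !dotvE; apply: eq_bigr => j _; rewrite mulrC. Qed.

Lemma dotvDl (u w v : vec) : dotv (u + w) v = dotv u v + dotv w v.
Proof. by rewrite !dotvE -big_split; apply: eq_bigr => j _; rewrite !mxE mulrDl. Qed.

Lemma dotvZl a (u v : vec) : dotv (a *: u) v = a * dotv u v.
Proof. by rewrite !dotvE mulr_sumr; apply: eq_bigr => j _; rewrite !mxE mulrA. Qed.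

Lemma dotvNl (u v : vec) : dotv (- u) v = - dotv u v.
Proof. by rewrite -scaleN1r dotvZl mulN1r. Qed.

Lemma dotvBl (u w v : vec) : dotv (u - w) v = dotv u v - dotv w v.
Proof. by rewrite dotvDl dotvNl. Qed.

Lemma dotv0l (v : vec) : dotv 0 v = 0.
Proof. by rewrite -(scale0r 0) dotvZl mul0r. Qed.

Lemma dotvDr (u w v : vec) : dotv v (u + w) = dotv v u + dotv v w.
Proof. by rewrite dotvC dotvDl !(dotvC v). Qed.
Lemma dotvZr a (u v : vec) : dotv v (a *: u) = a * dotv v u.
Proof. by rewrite dotvC dotvZl dotvC. Qed.
Lemma dotvNr (u v : vec) : dotv v (- u) = - dotv v u.
Proof. by rewrite dotvC dotvNl dotvC. Qed.
Lemma dotvBr (u w v : vec) : dotv v (u - w) = dotv v u - dotv v w.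
Proof. by rewrite dotvDr dotvNr. Qed.

Lemma dotv_suml (I : Type) (r : seq I) (P : pred I) (F : I -> vec) v :
  dotv (\sum_(i <- r | P i) F i) v = \sum_(i <- r | P i) dotv (F i) v.
Proof.
elim/big_rec2: _ => [|i y1 y2 _ <-]; first exact: dotv0l.
by rewrite dotvDl.
Qed.

Lemma dotv_sumr (I : Type) (r : seq I) (P : pred I) (F : I -> vec) v :
  dotv v (\sum_(i <- r | P i) F i) = \sum_(i <- r | P i) dotv v (F i).
Proof. by rewrite dotvC dotv_suml; apply: eq_bigr => i _; rewrite dotvC. Qed.

Lemma sqnorm_ge0 (u : vec) : 0 <= sqnorm u.
Proof. by rewrite /sqnorm dotvE; apply: sumr_ge0 => j _; rewrite -expr2 sqr_ge0. Qed.

Lemma sqnorm_eq0 (u : vec) : sqnorm u = 0 -> u = 0.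
Proof.
rewrite /sqnorm dotvE => /eqP; rewrite psumr_eq0; last by move=> j _; rewrite -expr2 sqr_ge0.
move=> /allP H; apply/rowP => j; rewrite mxE.
have := H j (mem_index_enum j); rewrite -expr2 sqrf_eq0 => /eqP.
move=> ->; by [].
Qed.

Lemma sqnorm_le0 (u : vec) : sqnorm u <= 0 -> u = 0.
Proof. by move=> H; apply: sqnorm_eq0; apply/eqP; rewrite eq_le H sqnorm_ge0. Qed.

Lemma sqnormD (u v : vec) : sqnorm (u + v) = sqnorm u + 2 * dotv u v + sqnorm v.
Proof. by rewrite /sqnorm dotvDl !dotvDr (dotvC v u); ring. Qed.

Lemma sqnormB (u v : vec) : sqnorm (u - v) = sqnorm u - 2 * dotv u v + sqnorm v.
Proof. by rewrite /sqnorm dotvBl !dotvBr (dotvC v u); ring. Qed.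

Lemma sqnormZ a (u : vec) : sqnorm (a *: u) = a ^+ 2 * sqnorm u.
Proof. by rewrite /sqnorm dotvZl dotvZr; ring. Qed.

Lemma sqnormN (u : vec) : sqnorm (- u) = sqnorm u.
Proof. by rewrite /sqnorm dotvNl dotvNr opprK. Qed.

Lemma sqnormBC (u v : vec) : sqnorm (u - v) = sqnorm (v - u).
Proof. by rewrite -sqnormN opprB. Qed.

Lemma sqnorm_le2 (u v : vec) : sqnorm (u + v) <= 2 * sqnorm u + 2 * sqnorm v.
Proof.
have := sqnorm_ge0 (u - v); rewrite sqnormB sqnormD => H; lra.
Qed.

Lemma dotv_le (a v : vec) (k : R) : 0 <= k -> sqnorm a <= k ^+ 2 * sqnorm v ->
  dotv a v <= k * sqnorm v.
Proof.
move=> k0 H; have [kz|kn] := eqVneq k 0.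
  rewrite kz in H *; move: H; rewrite expr2 !mul0r => H.
  by rewrite (sqnorm_le0 H) dotv0l.
have kp : 0 < k by rewrite lt_def kn k0.
have := sqnorm_ge0 (a - k *: v); rewrite sqnormB sqnormZ dotvZr => H2.
have : k * (k * sqnorm v - dotv a v) >= 0 by nra.
by rewrite pmulr_rge0 // subr_ge0.
Qed.
Lemma line_derive (F : vec -> R) g (x v : vec) (t : R) : is_gradient F g ->
  is_derive t 1 (fun s : R => F (s *: v + x)) (dotv (g (t *: v + x)) v).
Proof.
move=> hg; have [dF eF] := hg (t *: v + x).
have dga : is_diff t ((fun s : R => s *: v) + cst x) ((fun h : R => h *: v) + 0).
  by apply: is_diffD.
have dFi : is_diff (t *: v + x) F (fun h => dotv (g (t *: v + x)) h).
  by apply: DiffDef.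
have H := @is_diff_comp _ _ _ _ _ _ _ _ t dga dFi.
have -> : (fun s : R => F (s *: v + x)) = F \o ((fun s : R => s *: v) + cst x) by [].
apply: DeriveDef.
  by apply/diff_derivable; apply: ex_diff.
rewrite deriveE; last by apply: ex_diff.
by rewrite diff_val /= !fctE scale1r addr0.
Qed.

Lemma isg_add (F1 F2 : vec -> R) g1 g2 : is_gradient F1 g1 -> is_gradient F2 g2 ->
  is_gradient (fun x => F1 x + F2 x) (fun x => g1 x + g2 x).
Proof.
move=> h1 h2 x; have [d1 e1] := h1 x; have [d2 e2] := h2 x.
have -> : (fun x => F1 x + F2 x) = F1 + F2 by [].
split; first exact: differentiableD.
rewrite diffD // e1 e2; apply/funext => h /=; by rewrite dotvDl.
Qed.

Lemma isg_scale (F : vec -> R) g c : is_gradient F g ->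
  is_gradient (fun x => c * F x) (fun x => c *: g x).
Proof.
move=> h x; have [d1 e1] := h x.
have -> : (fun x => c * F x) = c *: F by [].
split; first exact: differentiableZ.
rewrite diffZ // e1; apply/funext => k /=; by rewrite dotvZl.
Qed.

Lemma isg_zero : is_gradient (fun _ : vec => (0:R)) (fun _ => 0).
Proof.
move=> x; have -> : (fun _ : vec => (0:R)) = cst 0 by [].
split; first exact: differentiable_cst.
rewrite diff_cst; apply/funext => k /=; by rewrite dotv0l.
Qed.

Lemma isg_sum (I : Type) (r : seq I) (P : pred I) (F : I -> vec -> R) g :
  (forall i, is_gradient (F i) (g i)) ->
  is_gradient (fun x => \sum_(i <- r | P i) F i x) (fun x => \sum_(i <- r | P i) g i x).
Proof.
move=> H; elim: r => [|a r IH].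
  have -> : (fun x : vec => \sum_(i <- [::] | P i) F i x) = (fun _ => 0).
    by apply/funext => x; rewrite big_nil.
  have -> : (fun x : vec => \sum_(i <- [::] | P i) g i x) = (fun _ => 0).
    by apply/funext => x; rewrite big_nil.
  exact: isg_zero.
case Pa: (P a).
  have -> : (fun x : vec => \sum_(i <- a :: r | P i) F i x) =
      (fun x => F a x + \sum_(i <- r | P i) F i x).
    by apply/funext => x; rewrite big_cons Pa.
  have -> : (fun x : vec => \sum_(i <- a :: r | P i) g i x) =
      (fun x => g a x + \sum_(i <- r | P i) g i x).
    by apply/funext => x; rewrite big_cons Pa.
  exact: isg_add.
have -> : (fun x : vec => \sum_(i <- a :: r | P i) F i x) =
    (fun x => \sum_(i <- r | P i) F i x).
  by apply/funext => x; rewrite big_cons Pa.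
have -> : (fun x : vec => \sum_(i <- a :: r | P i) g i x) =
    (fun x => \sum_(i <- r | P i) g i x).
  by apply/funext => x; rewrite big_cons Pa.
exact: IH.
Qed.

Lemma descent (F : vec -> R) g L x y : is_gradient F g -> smooth_with L g ->
  F y <= F x + dotv (g x) (y - x) + L / 2 * sqnorm (y - x).
Proof.
move=> hg [L0 hL].
set v := y - x; set c1 := dotv (g x) v; set c2 := L / 2 * sqnorm v.
pose phi := (fun s : R => F (s *: v + x)) - c1 \*: (@id R) - c2 \*: ((@id R) * (@id R)).
have dphi : forall t : R, is_derive t (1:R) phi
   (dotv (g (t *: v + x)) v - c1 *: (1:R) - c2 *: (t *: (1:R) + t *: (1:R))).
  move=> t; apply: is_deriveB.
    apply: is_deriveB; first exact: line_derive.
have cphi := @derivable_within_continuous _ _ phi `[0, 1]%R (fun t _ => @ex_derive _ _ _ _ _ _ _ (dphi t)).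
have [c c01 hc] := MVT (@ltr01 R) (fun t _ => dphi t) cphi.
have : phi 1 - phi 0 <= 0.
  rewrite hc subr0 mulr1 ![_%:A]mulr1.
  have -> : c2 *: (c + c) = c2 * (c + c) by [].
  have := itvP c01 => /= H.
  have c0 : 0 < c by rewrite H.
  have H2 := @dotv_le (g (c *: v + x) - g x) v (L * c) (mulr_ge0 L0 (ltW c0)).
  rewrite dotvBl -/c1 in H2.
  move: (hL (c *: v + x) x); rewrite addrK sqnormZ => hh.
  have hv := sqnorm_ge0 v.
  have : dotv (g (c *: v + x)) v - c1 <= L * c * sqnorm v.
    apply: H2; rewrite exprMn; nra.
  rewrite /c2 => H3; nra.
rewrite /phi !fctE /= scale1r scale0r add0r /c2 /v addrNK => H3.
have E : forall a b : R, a *: b = a * b by [].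
move: H3; rewrite !E !mulr1 !mul0r !mulr0; lra.
Qed.

Lemma cocoercive (F : vec -> R) g L x y : is_gradient F g -> smooth_with L g ->
  (forall a b, F a + dotv (g a) (b - a) <= F b) ->
  sqnorm (g x - g y) <= 2 * L * (F x - F y - dotv (g y) (x - y)).
Proof.
move=> hg hs hc; have [L0 hL] := hs; set w := g x - g y.
have [Lz|Ln] := eqVneq L 0.
  have := hL x y; rewrite -/w Lz expr2 !mul0r; by rewrite mulr0 mul0r.
have Lp : 0 < L by rewrite lt_def Ln L0.
set t := L^-1.
have tL : t * L = 1 by rewrite /t mulVf.
set z := x - t *: w.
have h1 := descent x z hg hs.
have h2 := hc y z.
have ez : z - x = - (t *: w) by rewrite /z addrAC subrr add0r.
have ezy : z - y = (x - y) - t *: w by rewrite /z addrAC.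
rewrite ez sqnormN sqnormZ dotvNr dotvZr in h1.
rewrite ezy dotvBr dotvZr in h2.
have hw : dotv (g x) w - dotv (g y) w = sqnorm w by rewrite /sqnorm {3}/w dotvBl.
set W := sqnorm w in hw h1 *.
move: h1 h2 => h1 h2.
have W0 : 0 <= W := sqnorm_ge0 w.
have key : t * W / 2 <= F x - F y - dotv (g y) (x - y).
  have : t * (dotv (g x) w - dotv (g y) w) - L / 2 * (t ^+ 2 * W) <= F x - F y - dotv (g y) (x - y) by lra.
  rewrite hw; have -> : L / 2 * (t ^+ 2 * W) = (t * L) * t * W / 2 by rewrite expr2; field.
  rewrite tL mul1r => H; lra.
have : 2 * L * (t * W / 2) = W.
  have -> : 2 * L * (t * W / 2) = (t * L) * W by field.
  by rewrite tL mul1r.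
move=> E; rewrite -{1}E; apply: ler_wpM2l => //; lra.
Qed.

Lemma grad_min (F : vec -> R) g xs : is_gradient F g -> (forall x, F xs <= F x) ->
  g xs = 0.
Proof.
move=> hg hmin; set v := g xs.
pose phi := fun s : R => F (s *: v + xs).
have dphi : forall t : R, is_derive t 1 phi (dotv (g (t *: v + xs)) v).
  by move=> t; exact: line_derive.
have h0 : is_derive (0:R) 1 phi 0.
  apply: (@derive1_at_min _ phi (-1) 1 0).
  - lra.
  - by move=> t _; exact: (@ex_derive _ _ _ _ _ _ _ (dphi t)).
  - by rewrite in_itv /= ltrN10 ltr01.
  - by move=> t _; rewrite /phi scale0r add0r.
have e1 := @derive_val _ _ _ _ _ _ _ h0.
have e2 := @derive_val _ _ _ _ _ _ _ (dphi 0).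
rewrite e1 scale0r add0r in e2.
by apply: sqnorm_eq0; rewrite /sqnorm -/v e2.
Qed.
End Vec.

Section Real.
Variable R : realType.

Lemma perC (a mu p tau nn sig r B U D : R) : 0 < a -> 0 < p -> 0 < nn -> 0 <= B ->
  U * (a + sig * p) <= nn * p * tau * B ->
  D * (a - sig * p + sig * mu * a) <= 0 ->
  tau / nn * r - 2 * a * nn^-1 * (tau * (B + mu / 2 * r))
  + 2 * a ^+ 2 * (p * (nn * p)^-1 ^+ 2 * (U + D))
  + p * (2 * sig * a * (nn * p)^-1 ^+ 2) * (p * U + (1 - p) * D)
  <= (1 - mu * a) * (tau / nn * r + p * (2 * sig * a * (nn * p)^-1 ^+ 2) * D).
Proof.
move=> a0 p0 n0 B0 hU hD; set K := (nn * p)^-1.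
have e : tau / nn * r - 2 * a * nn^-1 * (tau * (B + mu / 2 * r))
  + 2 * a ^+ 2 * (p * K ^+ 2 * (U + D))
  + p * (2 * sig * a * K ^+ 2) * (p * U + (1 - p) * D)
  - (1 - mu * a) * (tau / nn * r + p * (2 * sig * a * K ^+ 2) * D)
  = 2 * a * p * K ^+ 2 * (U * (a + sig * p) + D * (a - sig * p + sig * mu * a))
    - 2 * a * tau * nn^-1 * B.
  by rewrite /K; field; rewrite ?gt_eqF.
have hK : p * K ^+ 2 * (nn * p * tau * B) = tau * nn^-1 * B.
  by rewrite /K; field; rewrite ?gt_eqF.
have pK : 0 <= p * K ^+ 2 by apply: mulr_ge0; [exact: ltW | exact: sqr_ge0].
have h1 : p * K ^+ 2 * (U * (a + sig * p)) <= tau * nn^-1 * B.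
  by rewrite -hK; apply: ler_wpM2l.
have h2 : p * K ^+ 2 * (D * (a - sig * p + sig * mu * a)) <= 0.
  by apply: mulr_ge0_le0.
rewrite -subr_le0 e.
have : p * K ^+ 2 * (U * (a + sig * p) + D * (a - sig * p + sig * mu * a)) <= tau * nn^-1 * B.
  rewrite mulrDr; lra.
move=> h3.
have -> : 2 * a * p * K ^+ 2 * (U * (a + sig * p) + D * (a - sig * p + sig * mu * a))
   = 2 * a * (p * K ^+ 2 * (U * (a + sig * p) + D * (a - sig * p + sig * mu * a))) by ring.
have -> : 2 * a * tau * nn^-1 * B = 2 * a * (tau * nn^-1 * B) by ring.
rewrite subr_le0; apply: ler_wpM2l => //; lra.
Qed.

Lemma sum_lin (T : finType) (P : pred T) (X Y Z Q : T -> R) c c' :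
  \sum_(i | P i) (X i - c * Y i + c' * Z i + Q i) =
  \sum_(i | P i) X i - c * \sum_(i | P i) Y i + c' * \sum_(i | P i) Z i + \sum_(i | P i) Q i.
Proof.
by rewrite !big_split /= sumrN -!mulr_sumr.
Qed.

Lemma partB (T : finType) (G : {set T}) (p w U D : T -> R) (h : T -> T -> R) :
  (forall C C', C \in G -> C' \in G -> h C' C = if C == C' then U C else D C) ->
  \sum_(C in G) p C = 1 ->
  \sum_(C' in G) p C' * \sum_(C in G) w C * h C' C =
  \sum_(C in G) w C * (p C * U C + (1 - p C) * D C).
Proof.
move=> hh hs.
rewrite (eq_bigr (fun C' => \sum_(C in G) p C' * (w C * h C' C))); last by move=> *; rewrite mulr_sumr.
rewrite exchange_big /=; apply: eq_bigr => C CG.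
rewrite (eq_bigr (fun C' => w C * (p C' * h C' C))); last by move=> *; ring.
rewrite -mulr_sumr; congr (_ * _).
rewrite (bigD1 C) //= hh // eqxx.
rewrite (eq_bigr (fun C' => p C' * D C)); last first.
  by move=> C' /andP [C'G ne]; rewrite hh // eq_sym (negbTE ne).
rewrite -mulr_suml; congr (_ + _ * _).
by move: hs; rewrite (bigD1 C) //= => <-; rewrite addrC addrK.
Qed.
End Real.

Section PA.
Variables (R : realType) (d : nat).
Notation vec := 'rV[R]_d.

Lemma sum_lin3 (T : finType) (P : pred T) (X Y Z : T -> R) c c' :
  \sum_(i | P i) (X i - c * Y i + c' * Z i) =
  \sum_(i | P i) X i - c * \sum_(i | P i) Y i + c' * \sum_(i | P i) Z i.
Proof. by rewrite !big_split /= sumrN -!mulr_sumr. Qed.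

Lemma partA (T : finType) (G : {set T}) (p : T -> R) (u dl : T -> vec) (e : vec) (a nn : R) :
  (forall C, C \in G -> 0 < p C) -> \sum_(C in G) p C = 1 -> 0 < nn ->
  \sum_(C in G) p C * sqnorm (e - a *: (nn^-1 *: \sum_(C0 in G) dl C0 + (nn * p C)^-1 *: (u C - dl C)))
  <= sqnorm e - 2 * a * nn^-1 * \sum_(C in G) dotv (u C) e
     + 2 * a ^+ 2 * \sum_(C in G) p C * (nn * p C)^-1 ^+ 2 * (sqnorm (u C) + sqnorm (dl C)).
Proof.
move=> hp hs hn; set m := nn^-1 *: \sum_(C0 in G) dl C0.
have mE : m = nn^-1 *: \sum_(C0 in G) dl C0 by [].
clearbody m.
pose k C := (nn * p C)^-1.
pose g C := m + k C *: (u C - dl C).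
have pk : forall C, C \in G -> p C * k C = nn^-1.
  by move=> C CG; rewrite /k; have := hp C CG => h; field; rewrite ?gt_eqF.
have step1 : forall C, C \in G -> p C * sqnorm (e - a *: g C) <=
    p C * sqnorm e - (2 * a) * dotv (p C *: g C) e
    + a ^+ 2 * (2 * (p C * k C ^+ 2 * sqnorm (u C)) + 2 * (p C * sqnorm (m - k C *: dl C))).
  move=> C CG; rewrite sqnormB sqnormZ dotvZr dotvZl (dotvC e).
  have : sqnorm (g C) <= 2 * sqnorm (k C *: u C) + 2 * sqnorm (m - k C *: dl C).
    have -> : g C = k C *: u C + (m - k C *: dl C) by rewrite /g scalerBr addrCA.
    exact: sqnorm_le2.
  rewrite sqnormZ => H; have p0 := hp C CG.
  have := ler_wpM2l (mulr_ge0 (ltW p0) (sqr_ge0 a)) H => H2.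
  nra.
have S1 : \sum_(C in G) p C * sqnorm e = sqnorm e by rewrite -mulr_suml hs mul1r.
have S2 : \sum_(C in G) dotv (p C *: g C) e = nn^-1 * \sum_(C in G) dotv (u C) e.
  rewrite -dotv_suml -dotv_suml -dotvZl; congr dotv.
  rewrite (eq_bigr (fun C => p C *: m + nn^-1 *: (u C - dl C))); last first.
    move=> C CG; rewrite scalerDr; congr (_ + _); by rewrite scalerA pk.
  rewrite big_split /= -scaler_suml hs scale1r -scaler_sumr sumrB mE scalerBr.
  by rewrite addrC subrK.
have S3 : \sum_(C in G) p C * sqnorm (m - k C *: dl C) <= \sum_(C in G) p C * k C ^+ 2 * sqnorm (dl C).
  rewrite (eq_bigr (fun C => p C * sqnorm m - 2 * dotv m (nn^-1 *: dl C) + p C * k C ^+ 2 * sqnorm (dl C))); last first.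
    move=> C CG; rewrite -(pk C CG) sqnormB sqnormZ !dotvZr; ring.
  rewrite -[X in _ <= X]add0r !big_split /= sumrN -mulr_suml hs mul1r -mulr_sumr -dotv_sumr.
  rewrite -scaler_sumr -mE -/(sqnorm m).
  have := sqnorm_ge0 m; lra.
apply: le_trans (ler_sum _ step1) _.
rewrite sum_lin3 S1 S2 big_split /= -!mulr_sumr.
have -> : \sum_(C in G) p C * k C ^+ 2 * (sqnorm (u C) + sqnorm (dl C)) =
  \sum_(C in G) p C * k C ^+ 2 * sqnorm (u C) + \sum_(C in G) p C * k C ^+ 2 * sqnorm (dl C).
  by rewrite -big_split /=; apply: eq_bigr => C _; rewrite mulrDr.
have a2 : 0 <= a ^+ 2 := sqr_ge0 a.
have := ler_wpM2l a2 S3 => H.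
rewrite /k in H *; nra.
Qed.
End PA.

Lemma tuple_split (R : nmodType) (T : finType) (A : {set T}) k (F : k.+1.-tuple T -> R) :
  \sum_(s : k.+1.-tuple T | all (fun C => C \in A) s) F s =
  \sum_(C in A) \sum_(s : k.-tuple T | all (fun C => C \in A) s) F [tuple of C :: s].
Proof.
rewrite pair_big_dep /=.
rewrite (reindex (fun q : T * k.-tuple T => [tuple of q.1 :: q.2])) /=.
  by apply: eq_bigl => q.
exists (fun t : k.+1.-tuple T => (thead t, [tuple of behead t])).
  move=> [x t] _ /=; rewrite theadE; congr (_, _); by apply: val_inj.
move=> t _ /=; by rewrite -tuple_eta.
Qed.

Lemma L0_triv (R : realType) d (F : 'rV[R]_d -> R) g (mu : R) : 0 < mu -> smooth_with 0 g ->
  strongly_convex_with mu F g -> forall v : 'rV[R]_d, sqnorm v = 0.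
Proof.
move=> m0 [_ hL] hc v.
have := hL 0 v; rewrite expr2 !mul0r => /sqnorm_le0 /eqP; rewrite subr_eq0 => /eqP e.
have h1 := hc 0 v; have h2 := hc v 0.
rewrite -e (sqnormBC 0 v) -(opprB v 0) dotvNr in h2.
rewrite subr0 in h1 h2.
have hv := sqnorm_ge0 v.
apply/eqP; rewrite eq_le hv andbT.
have : mu * sqnorm v <= 0 by lra.
by rewrite pmulr_rle0.
Qed.

Section Main.
Variables (R : realType) (d n tau : nat) (f : 'I_n -> 'rV[R]_d -> R)
  (grad : 'I_n -> 'rV[R]_d -> 'rV[R]_d) (xstar : 'rV[R]_d)
  (G : {set {set 'I_n}}) (p L : {set 'I_n} -> R) (mu alpha : R).
Notation vec := 'rV[R]_d.
Hypothesis hgrad : forall i, is_gradient (f i) (grad i).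
Hypothesis hmin : forall x, fsum f xstar <= fsum f x.
Hypothesis hpart : finset.partition G [set: 'I_n].
Hypothesis hcard : forall C, C \in G -> #|C| = tau.
Hypothesis hp : forall C, C \in G -> 0 < p C.
Hypothesis hs : \sum_(C in G) p C = 1.
Hypothesis hmu : 0 < mu.
Hypothesis hsm : forall C, C \in G -> smooth_with (L C) (gradC grad C).
Hypothesis hsc : forall C, C \in G -> strongly_convex_with mu (fC f C) (gradC grad C).
Hypothesis ha : 0 < alpha.

Lemma exC : exists C, C \in G.
Proof.
case: (set_0Vmem G) => [G0|[C0 C0G]]; last by exists C0.
by move: hs; rewrite G0 big_set0 => /eqP; rewrite eq_sym oner_eq0.
Qed.

Lemma G_ne0 C : C \in G -> C != finset.set0.
Proof.
move: hpart => /and3P [_ _ h0] CG; apply/eqP => e; rewrite e in CG.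
by rewrite CG in h0.
Qed.

Lemma tau_pos : (0 < tau)%N.
Proof. have [C CG] := exC; by rewrite -(hcard CG) card_gt0 G_ne0. Qed.

Lemma n_pos : (0 < n)%N.
Proof.
have [C CG] := exC; have /set0Pn [i _] := G_ne0 CG.
exact: (leq_ltn_trans (leq0n i) (ltn_ord i)).
Qed.

Lemma tauR : (tau%:R : R) != 0. Proof. by rewrite pnatr_eq0 -lt0n tau_pos. Qed.
Lemma nR : (n%:R : R) != 0. Proof. by rewrite pnatr_eq0 -lt0n n_pos. Qed.
Lemma nRp : 0 < (n%:R : R). Proof. by rewrite ltr0n n_pos. Qed.
Lemma tauRp : 0 < (tau%:R : R). Proof. by rewrite ltr0n tau_pos. Qed.

Lemma sum_tau : \sum_(C in G) (tau%:R : R) = n%:R.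
Proof.
have h := card_partition hpart; rewrite cardsT card_ord in h.
apply: (@eq_trans _ _ (\sum_(C in G) (#|C|%:R : R))).
  by apply: eq_bigr => C CG; rewrite hcard.
by rewrite -natr_sum -h.
Qed.

Lemma sum_part (F : 'I_n -> vec) : \sum_(i < n) F i = \sum_(C in G) \sum_(i in C) F i.
Proof.
move: hpart => /and3P [/eqP hc ht _].
rewrite -(finset.big_trivIset (E := F) G ht) hc; apply: eq_bigl => i; by rewrite inE.
Qed.

Lemma disjG C C' i : C \in G -> C' \in G -> C != C' -> i \in C -> (i \in C') = false.
Proof.
move: hpart => /and3P [_ /finset.trivIsetP ht _] CG C'G ne.
exact: (disjointFr (ht C C' CG C'G ne)).
Qed.

Lemma gsum0 : \sum_(i < n) grad i xstar = 0.
Proof.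
have hg : is_gradient (fsum f) (fun x => n%:R^-1 *: \sum_(i < n) grad i x).
  exact: (isg_scale _ (isg_sum _ _ hgrad)).
have := grad_min hg hmin => H.
have := congr1 (fun v => n%:R *: v) H; rewrite /= scalerA mulfV ?nR // scale1r scaler0.
by [].
Qed.

Lemma isgC C : is_gradient (fC f C) (gradC grad C).
Proof. exact: (isg_scale _ (isg_sum _ _ hgrad)). Qed.

Definition delta (J : 'I_n -> vec) (C : {set 'I_n}) := \sum_(i in C) (J i - grad i xstar).
Definition uu (x : vec) (C : {set 'I_n}) := \sum_(i in C) (grad i x - grad i xstar).

Lemma Jmean_delta J : Jmean J = n%:R^-1 *: \sum_(C in G) delta J C.
Proof.
rewrite /Jmean /delta -(sum_part (fun i => J i - grad i xstar)).
by rewrite sumrB gsum0 subr0.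
Qed.

Lemma diffJ J C : Jmean J - gradCJ grad p C J xstar = (n%:R * p C)^-1 *: delta J C.
Proof.
rewrite /gradCJ opprD addrA subrr add0r -scalerN /delta -sumrN; congr (_ *: _).
by apply: eq_bigr => i _; rewrite opprB.
Qed.

Lemma gradCJ_uu J C x : gradCJ grad p C J x = Jmean J + (n%:R * p C)^-1 *: (uu x C - delta J C).
Proof.
rewrite /gradCJ /uu /delta -sumrB; congr (_ + _ *: _); apply: eq_bigr => i _.
by rewrite opprB addrA subrK.
Qed.

Lemma delta_step x J C C' : C \in G -> C' \in G ->
  delta (fun i => if i \in C' then grad i x else J i) C = if C == C' then uu x C else delta J C.
Proof.
move=> CG C'G; case: eqP => [->|ne].
  by apply: eq_bigr => i iC'; rewrite iC'.
apply: eq_bigr => i iC; rewrite (disjG CG C'G) //; exact/eqP.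
Qed.

Lemma uu_grad x C : C \in G -> uu x C = tau%:R *: (gradC grad C x - gradC grad C xstar).
Proof.
move=> CG; rewrite /gradC hcard // -scalerBr scalerA mulfV ?tauR // scale1r /uu sumrB.
by [].
Qed.

Definition W (C : {set 'I_n}) := 2 * (n%:R / (4 * tau%:R * L C)) * alpha * (n%:R * p C)^-1 ^+ 2.

Lemma Psi_eq C x J : Psi grad p L tau alpha xstar C (x, J) =
  sqnorm (x - xstar) + W C * sqnorm (delta J C).
Proof. by rewrite /Psi /= diffJ sqnormZ /W !mulrA. Qed.

Definition E (st : vec * ('I_n -> vec)) := \sum_(C in G) p C * Psi grad p L tau alpha xstar C st.

Definition B (x : vec) (C : {set 'I_n}) := fC f C x - fC f C xstar - dotv (gradC grad C xstar) (x - xstar).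

Lemma fact_dot x C : C \in G ->
  tau%:R * (B x C + mu / 2 * sqnorm (x - xstar)) <= dotv (uu x C) (x - xstar).
Proof.
move=> CG; rewrite uu_grad // dotvZl; apply: ler_wpM2l; first exact: ler0n.
have h1 := hsc CG xstar x; have h2 := hsc CG x xstar.
rewrite sqnormBC -opprB dotvNr in h2.
rewrite dotvBl /B; lra.
Qed.

Lemma fact_B0 x C : C \in G -> 0 <= B x C.
Proof.
move=> CG; have h1 := hsc CG xstar x; have := sqnorm_ge0 (x - xstar) => h.
have : 0 <= mu / 2 * sqnorm (x - xstar) by apply: mulr_ge0 => //; apply: divr_ge0 => //; exact: ltW.
rewrite /B; lra.
Qed.

Lemma fact_U x C : C \in G -> sqnorm (uu x C) <= tau%:R ^+ 2 * (2 * L C * B x C).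
Proof.
move=> CG; rewrite uu_grad // sqnormZ; apply: ler_wpM2l; first exact: sqr_ge0.
apply: cocoercive; [exact: isgC | exact: hsm | ].
move=> a b; have := hsc CG a b; have := sqnorm_ge0 (b - a) => h.
have : 0 <= mu / 2 * sqnorm (b - a) by apply: mulr_ge0 => //; apply: divr_ge0 => //; exact: ltW.
lra.
Qed.

Definition sig (C : {set 'I_n}) := n%:R / (4 * tau%:R * L C).

Lemma hUD x J C : C \in G -> (alpha <= p C / (mu + 4 * L C * tau%:R / n%:R)) ->
  sqnorm (uu x C) * (alpha + sig C * p C) <= n%:R * p C * tau%:R * B x C /\
  sqnorm (delta J C) * (alpha - sig C * p C + sig C * mu * alpha) <= 0.
Proof.
move=> CG hst; have [L0 _] := hsm CG; have p0 := hp CG; have B0 := fact_B0 x CG.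
have npB : 0 <= n%:R * p C * tau%:R * B x C.
  apply: mulr_ge0 => //; apply: mulr_ge0; [apply: mulr_ge0 => //; exact: ltW | exact: ler0n].
have [Lz|Ln] := eqVneq (L C) 0.
  have hs0 := hsm CG; rewrite Lz in hs0.
  have triv := L0_triv hmu hs0 (hsc CG).
  by rewrite /sig Lz mulr0 invr0 mulr0 !triv !mul0r; split.
have Lp : 0 < L C by rewrite lt_def Ln L0.
set X := 4 * L C * tau%:R / n%:R.
have X0 : 0 < X by rewrite /X; apply: divr_gt0; [apply: mulr_gt0; [apply: mulr_gt0 => // | exact: tauRp] | exact: nRp].
have hst' : alpha * (mu + X) <= p C by rewrite -ler_pdivlMr //; apply: addr_gt0.
have e1 : sig C * X = 1.
  rewrite /sig /X; field; apply/and3P; split => //; [exact: nR | exact: tauR].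
have s0 : 0 <= sig C.
  rewrite /sig; apply: divr_ge0; first exact: ler0n.
  by apply: mulr_ge0 => //; apply: mulr_ge0 => //; exact: ler0n.
split.
  have hU := fact_U x CG.
  have aS : 0 <= alpha + sig C * p C by apply: addr_ge0; [exact: ltW | apply: mulr_ge0 => //; exact: ltW].
  apply: le_trans (ler_wpM2r aS hU) _.
  have h4 : alpha * X <= p C.
    have : 0 <= alpha * mu by apply: mulr_ge0; exact: ltW.
    move: hst'; rewrite mulrDr; lra.
  have -> : tau%:R ^+ 2 * (2 * L C * B x C) * (alpha + sig C * p C) =
    (tau%:R * B x C * n%:R / 2) * (alpha * X) + (tau%:R * B x C * n%:R / 2) * p C * (sig C * X).
    rewrite /X; field; exact: nR.
  rewrite e1 mulr1.
  have c0 : 0 <= tau%:R * B x C * n%:R / 2.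
    apply: divr_ge0 => //; apply: mulr_ge0; [apply: mulr_ge0 => //; exact: ler0n | exact: ler0n].
  have := ler_wpM2l c0 h4 => h5.
  have -> : n%:R * p C * tau%:R * B x C = 2 * (tau%:R * B x C * n%:R / 2 * p C) by field.
  lra.
apply: mulr_ge0_le0; first exact: sqnorm_ge0.
have := ler_wpM2l s0 hst' => h.
have : sig C * (alpha * (mu + X)) = sig C * mu * alpha + alpha * (sig C * X) by ring.
rewrite e1 mulr1 => e2; lra.
Qed.

Lemma sumX (r : R) : \sum_(C in G) tau%:R / n%:R * r = r.
Proof. by rewrite -!mulr_suml sum_tau mulfV ?mul1r // nR. Qed.

Lemma E_eq x J : E (x, J) = sqnorm (x - xstar) + \sum_(C in G) p C * W C * sqnorm (delta J C).
Proof.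
rewrite /E (eq_bigr (fun C => p C * sqnorm (x - xstar) + p C * W C * sqnorm (delta J C))).
  by rewrite big_split /= -mulr_suml hs mul1r.
by move=> C _; rewrite Psi_eq mulrDr mulrA.
Qed.

Lemma onestep x J : (forall C, C \in G -> alpha <= p C / (mu + 4 * L C * tau%:R / n%:R)) ->
  \sum_(C' in G) p C' * E (saga_step grad p alpha (x, J) C') <= (1 - mu * alpha) * E (x, J).
Proof.
move=> hst.
set e := x - xstar.
pose Jn (C' : {set 'I_n}) := fun i => if i \in C' then grad i x else J i.
have hx : forall C', x - alpha *: gradCJ grad p C' J x - xstar =
   e - alpha *: (n%:R^-1 *: \sum_(C0 in G) delta J C0 + (n%:R * p C')^-1 *: (uu x C' - delta J C')).
  by move=> C'; rewrite gradCJ_uu Jmean_delta /e addrAC.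
have hE : \sum_(C' in G) p C' * E (saga_step grad p alpha (x, J) C') =
   \sum_(C' in G) p C' * sqnorm (e - alpha *: (n%:R^-1 *: \sum_(C0 in G) delta J C0 + (n%:R * p C')^-1 *: (uu x C' - delta J C')))
   + \sum_(C' in G) p C' * \sum_(C in G) (p C * W C) * sqnorm (delta (Jn C') C).
  rewrite -big_split /=; apply: eq_bigr => C' C'G.
  by rewrite -mulrDr /= E_eq hx.
rewrite hE.
have hA := partA (uu x) (delta J) e alpha hp hs nRp.
have hB := @partB _ _ G p (fun C => p C * W C) (fun C => sqnorm (uu x C)) (fun C => sqnorm (delta J C))
   (fun C' C => sqnorm (delta (Jn C') C)).
rewrite hB; last first.
- exact: hs.
- by move=> C C' CG C'G; rewrite /Jn delta_step //; case: eqP.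
rewrite E_eq -/e.
set r := sqnorm e.
have hper : forall C, C \in G ->
  tau%:R / n%:R * r - 2 * alpha * n%:R^-1 * (tau%:R * (B x C + mu / 2 * r))
  + 2 * alpha ^+ 2 * (p C * (n%:R * p C)^-1 ^+ 2 * (sqnorm (uu x C) + sqnorm (delta J C)))
  + p C * W C * (p C * sqnorm (uu x C) + (1 - p C) * sqnorm (delta J C))
  <= (1 - mu * alpha) * (tau%:R / n%:R * r + p C * W C * sqnorm (delta J C)).
  move=> C CG; have [h1 h2] := hUD x J CG (hst C CG).
  exact: (perC r ha (hp CG) nRp (fact_B0 x CG) h1 h2).
have hS := fun l => ler_sum l hper.
have {hS} hS := hS (index_enum _).
have hR : \sum_(C in G) (1 - mu * alpha) * (tau%:R / n%:R * r + p C * W C * sqnorm (delta J C))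
   = (1 - mu * alpha) * (r + \sum_(C in G) p C * W C * sqnorm (delta J C)).
  by rewrite -mulr_sumr big_split /= sumX.
rewrite sum_lin sumX hR in hS.
have hD : \sum_(C in G) tau%:R * (B x C + mu / 2 * r) <= \sum_(C in G) dotv (uu x C) e.
  by apply: ler_sum => C CG; exact: fact_dot.
have c0 : 0 <= 2 * alpha * n%:R^-1.
  apply: mulr_ge0; [apply: mulr_ge0 => //; exact: ltW | rewrite invr_ge0; exact: ler0n].
have := ler_wpM2l c0 hD => hD'.
rewrite -/r in hA; lra.
Qed.

Definition V k st := \sum_(s : k.-tuple {set 'I_n} | all (fun C => C \in G) s)
  (\prod_(j < k) p (tnth s j)) * E (foldl (saga_step grad p alpha) st s).

Lemma V_S k st : V k.+1 st = \sum_(C in G) p C * V k (saga_step grad p alpha st C).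
Proof.
rewrite /V tuple_split; apply: eq_bigr => C CG; rewrite mulr_sumr; apply: eq_bigr => s _.
rewrite big_ord_recl tnth0 /=.
rewrite (eq_bigr (fun j => p (tnth s j))); first by rewrite mulrA.
by move=> j _; rewrite tnthS.
Qed.

Lemma V0 st : V 0 st = E st.
Proof.
rewrite /V (big_pred1 [tuple]) ?big_ord0 ?mul1r //.
by move=> s; rewrite [s]tuple0 /= eqxx.
Qed.

Lemma Psi_ge0 C st : C \in G -> 0 <= Psi grad p L tau alpha xstar C st.
Proof.
move=> CG; have [L0 _] := hsm CG; rewrite /Psi /=.
apply: addr_ge0; first exact: sqnorm_ge0.
apply: mulr_ge0; last exact: sqnorm_ge0.
apply: mulr_ge0; last exact: ltW.
apply: mulr_ge0 => //; apply: divr_ge0; first exact: ler0n.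
by apply: mulr_ge0 => //; apply: mulr_ge0 => //; exact: ler0n.
Qed.

Lemma E_ge0 st : 0 <= E st.
Proof.
apply: sumr_ge0 => C CG; apply: mulr_ge0; [exact: ltW (hp CG) | exact: Psi_ge0].
Qed.

Lemma mua_le1 : (forall C, C \in G -> alpha <= p C / (mu + 4 * L C * tau%:R / n%:R)) ->
  0 <= 1 - mu * alpha.
Proof.
move=> hst; have [C CG] := exC; have [L0 _] := hsm CG.
have X0 : 0 <= 4 * L C * tau%:R / n%:R.
  apply: divr_ge0; last exact: ler0n.
  by apply: mulr_ge0; [apply: mulr_ge0 | exact: ler0n].
have h := hst C CG; rewrite ler_pdivlMr in h; last by apply: ltr_wpDr.
have pC1 : p C <= 1.
  move: hs; rewrite (bigD1 C) //= => h1.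
  have : 0 <= \sum_(i in G | i != C) p i.
    by apply: sumr_ge0 => i /andP [iG _]; exact: ltW (hp iG).
  lra.
have : 0 <= alpha * (4 * L C * tau%:R / n%:R) by apply: mulr_ge0 => //; exact: ltW.
move: h; rewrite mulrDr; lra.
Qed.

Lemma V_bound : (forall C, C \in G -> alpha <= p C / (mu + 4 * L C * tau%:R / n%:R)) ->
  forall k st, V k st <= (1 - mu * alpha) ^+ k * E st.
Proof.
move=> hst; elim => [|k IH] st; first by rewrite V0 expr0 mul1r.
rewrite V_S.
apply: (@le_trans _ _ (\sum_(C in G) p C * ((1 - mu * alpha) ^+ k * E (saga_step grad p alpha st C)))).
  apply: ler_sum => C CG; apply: ler_wpM2l; [exact: ltW (hp CG) | exact: IH].
rewrite (eq_bigr (fun C => (1 - mu * alpha) ^+ k * (p C * E (saga_step grad p alpha st C)))); last first.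
  by move=> C _; rewrite mulrCA.
rewrite -mulr_sumr.
have -> : (1 - mu * alpha) ^+ k.+1 * E st = (1 - mu * alpha) ^+ k * ((1 - mu * alpha) * E st).
  by rewrite exprS; ring.
apply: ler_wpM2l; first exact: exprn_ge0 (mua_le1 hst).
case: st => x J; exact: onestep.
Qed.

Lemma EPsi_V x0 J0 k : EPsi grad G p L tau alpha xstar x0 J0 k = V k (x0, J0).
Proof.
rewrite /EPsi /V; apply: eq_bigr => s _; rewrite /E mulr_sumr; apply: eq_bigr => C _.
by rewrite mulrA.
Qed.

Lemma part1 x0 J0 : (forall C, C \in G -> alpha <= p C / (mu + 4 * L C * tau%:R / n%:R)) ->
  forall k : nat,
     EPsi grad G p L tau alpha xstar x0 J0 k
       <= (1 - mu * alpha) ^+ k * EPsi grad G p L tau alpha xstar x0 J0 0.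
Proof. by move=> hst k; rewrite !EPsi_V V0; exact: V_bound. Qed.

Lemma part2 x0 J0 : (forall C, C \in G -> alpha <= p C / (mu + 4 * L C * tau%:R / n%:R)) ->
   (exists2 C, C \in G & alpha = p C / (mu + 4 * L C * tau%:R / n%:R)) ->
   forall (eps : R) (k : nat), 0 < eps ->
     (\big[Num.max/0]_(C in G)
        ((p C)^-1 + 4 * L C / mu * (tau%:R / (n%:R * p C)))) * ln (eps^-1)
       <= k%:R ->
     EPsi grad G p L tau alpha xstar x0 J0 k
       <= eps * EPsi grad G p L tau alpha xstar x0 J0 0.
Proof.
move=> hst [C1 C1G ha1] eps k e0 hk.
apply: le_trans (part1 x0 J0 hst k) _.
apply: ler_wpM2r; first by rewrite EPsi_V V0; exact: E_ge0.
have c0 := mua_le1 hst.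
have ma : 0 < mu * alpha by apply: mulr_gt0.
have c1 : 1 - mu * alpha <= 1 by lra.
have [e1|e1] := leP 1 eps.
  exact: le_trans (exprn_ile1 _ c0 c1) e1.
have lnp : 0 <= ln (eps^-1).
  apply: ln_ge0; rewrite invf_ge1 //; exact: ltW.
have [L0 _] := hsm C1G; have p1 := hp C1G.
have X0 : 0 <= 4 * L C1 * tau%:R / n%:R.
  apply: divr_ge0; last exact: ler0n.
  by apply: mulr_ge0; [apply: mulr_ge0 | exact: ler0n].
have hterm : (p C1)^-1 + 4 * L C1 / mu * (tau%:R / (n%:R * p C1)) = (mu * alpha)^-1.
  have a1 := mulr_gt0 hmu nRp.
  have b1 : 0 <= 4 * L C1 * tau%:R by apply: mulr_ge0; [apply: mulr_ge0 | exact: ler0n].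
  have c1' : mu * n%:R + 4 * L C1 * tau%:R != 0 by rewrite gt_eqF //; lra.
  rewrite ha1; field.
  by apply/and4P; split; [exact: nR | exact: c1' | by rewrite gt_eqF | by rewrite gt_eqF].
have hmax : (mu * alpha)^-1 <= \big[Num.max/0]_(C in G)
        ((p C)^-1 + 4 * L C / mu * (tau%:R / (n%:R * p C))).
  rewrite -hterm.
  exact: (@le_bigmax_cond _ _ _ 0 C1 (fun C => C \in G) (fun C => (p C)^-1 + 4 * L C / mu * (tau%:R / (n%:R * p C))) C1G).
have h1 : (mu * alpha)^-1 * ln (eps^-1) <= k%:R.
  apply: le_trans hk; apply: ler_wpM2r => //.
have h2 : ln (eps^-1) <= mu * alpha * k%:R.
  move: h1; rewrite ler_pdivrMl //.
have h3 : (1 - mu * alpha) ^+ k <= expR (- (mu * alpha)) ^+ k.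
  apply: lerXn2r; rewrite ?inE ?nnegrE //; exact: expR_ge1Dx.
apply: le_trans h3 _.
rewrite -expRM_natl.
have := lnK_eq eps; rewrite e0 => /eqP {1}<-.
rewrite ler_expR.
rewrite lnV ?posrE // in h2.
lra.
Qed.
End Main.

Unset Implicit Arguments.

Theorem theorem5p2 (R : realType) (d n tau : nat)
  (f : 'I_n -> 'rV[R]_d -> R) (grad : 'I_n -> 'rV[R]_d -> 'rV[R]_d)
  (xstar : 'rV[R]_d)
  (G : {set {set 'I_n}}) (p L : {set 'I_n} -> R) (mu alpha : R)
  (x0 : 'rV[R]_d) (J0 : 'I_n -> 'rV[R]_d) :
  (forall i, is_gradient (f i) (grad i)) ->
  (forall x, fsum f xstar <= fsum f x) ->
  finset.partition G (finset.setT : {set 'I_n}) ->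
  (forall C, C \in G -> #|C| = tau) ->
  (forall C, C \in G -> 0 < p C) ->
  \sum_(C in G) p C = 1 ->
  0 < mu ->
  (forall C, C \in G -> smooth_with (L C) (gradC grad C)) ->
  (forall C, C \in G -> strongly_convex_with mu (fC f C) (gradC grad C)) ->
  0 < alpha ->
  ((forall C, C \in G -> alpha <= p C / (mu + 4 * L C * tau%:R / n%:R)) ->
   forall k : nat,
     EPsi grad G p L tau alpha xstar x0 J0 k
       <= (1 - mu * alpha) ^+ k * EPsi grad G p L tau alpha xstar x0 J0 0)
  /\
  ((forall C, C \in G -> alpha <= p C / (mu + 4 * L C * tau%:R / n%:R)) ->
   (exists2 C, C \in G & alpha = p C / (mu + 4 * L C * tau%:R / n%:R)) ->
   forall (eps : R) (k : nat), 0 < eps ->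
     (\big[Num.max/0]_(C in G)
        ((p C)^-1 + 4 * L C / mu * (tau%:R / (n%:R * p C)))) * ln (eps^-1)
       <= k%:R ->
     EPsi grad G p L tau alpha xstar x0 J0 k
       <= eps * EPsi grad G p L tau alpha xstar x0 J0 0).
Proof.
move=> h1 h2 h3 h4 h5 h6 h7 h8 h9 h10; split.
  exact: (part1 h1 h2 h3 h4 h5 h6 h7 h8 h9 h10).
exact: (part2 h1 h2 h3 h4 h5 h6 h7 h8 h9 h10).
Qed.
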